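(* Let $M_1,\dots,M_s$ be complex $4\times 4$ matrices each of rank exactly $2$. Then there exists an open dense subset $\Delta\subset L\times L$, where $L$ is the space of real $4\times 4$ matrices, such that for every $(L_1,L_2)\in\Delta$ and every $1\le i\le s$, the leading principal minor of order $2$ of $L_1 M_i L_2$ (the determinant of its upper-left $2\times 2$ submatrix) is nonzero. *)

(* Defs.v *)
From HB Require Import structures.
From mathcomp Require Import all_boot all_order all_algebra.
From mathcomp Require Import all_classical all_reals all_analysis.
From mathcomp Require Import matrix_topology matrix_normedtype.
From mathcomp Require Import complex.
Import numFieldNormedType.Exports.
Set Implicit Arguments. Unset Strict Implicit. Unset Printing Implicit Defensive.
Import Order.TTheory GRing.Theory Num.Theory.
Local Open Scope ring_scope.

Definition lead2 (F : Type) (A : 'M[F]_4) : 'M[F]_2 :=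
  \matrix_(i < 2, j < 2) A (widen_ord (isT : 2 <= 4)%N i) (widen_ord (isT : 2 <= 4)%N j).

Definition lead_minor2 (F : comNzRingType) (A : 'M[F]_4) : F := \det (lead2 A).

Definition cplx_mx (R : rcfType) (A : 'M[R]_4) : 'M[R[i]]_4 :=
  map_mx (fun x : R => x%:C%C) A.

(* Main.v *)
Require Import Defs.
From HB Require Import structures.
From mathcomp Require Import all_boot all_order all_algebra.
From mathcomp Require Import all_classical all_reals all_analysis.
From mathcomp Require Import matrix_topology matrix_normedtype.
From mathcomp Require Import complex.
Import numFieldNormedType.Exports.
Import Order.TTheory GRing.Theory Num.Theory.
Local Open Scope ring_scope.
Local Open Scope classical_set_scope.
Set Implicit Arguments. Unset Strict Implicit. Unset Printing Implicit Defensive.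
Lemma det2 (F : comNzRingType) (A : 'M[F]_2) : \det A = A 0 0 * A 1 1 - A 0 1 * A 1 0.
Proof.
rewrite (expand_det_row _ 0) !big_ord_recl big_ord0 /cofactor !det_mx11 !mxE /=.
rewrite (_ : lift (lift ord0 ord0) 0 = 0 :> 'I_2); last by apply/val_inj.
rewrite (_ : lift 0 0 = 1 :> 'I_2); last by apply/val_inj.
rewrite (_ : ord0 = 0 :> 'I_2); last by apply/val_inj.
by rewrite /bump /= expr0 expr1 mul1r mulN1r addr0 mulrN.
Qed.

Section CC.
Variable (R : realType).
Let X := ('M[R]_4 * 'M[R]_4)%type.
Definition ccf (g : X -> R[i]) :=
  continuous (fun x => complex.Re (g x)) /\ continuous (fun x => complex.Im (g x)).

Lemma ccfD g h : ccf g -> ccf h -> ccf (fun x => g x + h x).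
Proof.
move=> [g1 g2] [h1 h2]; split => x.
- have -> : (fun x => complex.Re (g x + h x)) = (fun x => complex.Re (g x) + complex.Re (h x)).
    by apply: funext => y; case: (g y) => ? ?; case: (h y).
  by apply: continuousD; [exact: g1|exact: h1].
- have -> : (fun x => complex.Im (g x + h x)) = (fun x => complex.Im (g x) + complex.Im (h x)).
    by apply: funext => y; case: (g y) => ? ?; case: (h y).
  by apply: continuousD; [exact: g2|exact: h2].
Qed.

Lemma ccfM g h : ccf g -> ccf h -> ccf (fun x => g x * h x).
Proof.
move=> [g1 g2] [h1 h2]; split => x.
- have -> : (fun x => complex.Re (g x * h x)) = 
     (fun x => complex.Re (g x) * complex.Re (h x) - complex.Im (g x) * complex.Im (h x)).
    by apply: funext => y; case: (g y) => ? ?; case: (h y).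
  apply: (@continuousB _ _ _ (fun x => complex.Re (g x) * complex.Re (h x)) (fun x => complex.Im (g x) * complex.Im (h x))).
    by apply: continuousM; [exact: g1|exact: h1].
  by apply: continuousM; [exact: g2|exact: h2].
- have -> : (fun x => complex.Im (g x * h x)) = 
     (fun x => complex.Re (g x) * complex.Im (h x) + complex.Im (g x) * complex.Re (h x)).
    by apply: funext => y; case: (g y) => ? ?; case: (h y).
  apply: (@continuousD _ _ _ (fun x => complex.Re (g x) * complex.Im (h x)) (fun x => complex.Im (g x) * complex.Re (h x))).
    by apply: continuousM; [exact: g1|exact: h2].
  by apply: continuousM; [exact: g2|exact: h1].
Qed.

Lemma ccfN g : ccf g -> ccf (fun x => - g x).
Proof.
move=> [g1 g2]; split => x.
- have -> : (fun x => complex.Re (- g x)) = (fun x => - complex.Re (g x)).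
    by apply: funext => y; case: (g y).
  apply: continuousN; exact: g1.
- have -> : (fun x => complex.Im (- g x)) = (fun x => - complex.Im (g x)).
    by apply: funext => y; case: (g y).
  apply: continuousN; exact: g2.
Qed.

Lemma ccfC c : ccf (fun _ => c).
Proof. by split => x; apply: cst_continuous. Qed.

Lemma ccfR (h : X -> R) : continuous h -> ccf (fun x => (h x)%:C%C).
Proof. by move=> hc; split => //= x; apply: cst_continuous. Qed.

Lemma ccfS n (F : 'I_n -> X -> R[i]) : (forall a, ccf (F a)) -> ccf (fun x => \sum_(a < n) F a x).
Proof.
elim: n F => [|n IH] F hF.
  have -> : (fun x => \sum_(a < 0) F a x) = fun _ => 0 by apply: funext => x; rewrite big_ord0.
  exact: ccfC.
have -> : (fun x => \sum_(a < n.+1) F a x) = fun x => \sum_(a < n) F (widen_ord (leqnSn n) a) x + F ord_max x.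
  by apply: funext => x; rewrite big_ord_recr.
apply: ccfD => //; exact: IH.
Qed.

Lemma coord1 i j : continuous (fun x : X => x.1 i j).
Proof.
move=> x; apply: (@continuous_comp _ _ _ (fun x : X => x.1) (fun M : 'M[R]_4 => M i j)).
  exact: cvg_fst.
exact: coord_continuous.
Qed.
Lemma coord2 i j : continuous (fun x : X => x.2 i j).
Proof.
move=> x; apply: (@continuous_comp _ _ _ (fun x : X => x.2) (fun M : 'M[R]_4 => M i j)).
  exact: cvg_snd.
exact: coord_continuous.
Qed.

Lemma ccf_minor (M : 'M[R[i]]_4) : ccf (fun x : X => lead_minor2 (cplx_mx x.1 *m M *m cplx_mx x.2)).
Proof.
have he : forall i j, ccf (fun x : X => (cplx_mx x.1 *m M *m cplx_mx x.2) i j).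
  move=> i j.
  have -> : (fun x : X => (cplx_mx x.1 *m M *m cplx_mx x.2) i j) =
     fun x => \sum_(b < 4) (\sum_(a < 4) (x.1 i a)%:C%C * M a b) * (x.2 b j)%:C%C.
    by apply: funext => x; rewrite !mxE; apply: eq_bigr => b _; rewrite !mxE; congr (_ * _);
       apply: eq_bigr => a _; rewrite !mxE.
  apply: ccfS => b; apply: ccfM; last exact/ccfR/coord2.
  apply: ccfS => a; apply: ccfM; [exact/ccfR/coord1 | exact: ccfC].
rewrite /lead_minor2.
have -> : (fun x : X => \det (lead2 (cplx_mx x.1 *m M *m cplx_mx x.2))) =
   fun x => (lead2 (cplx_mx x.1 *m M *m cplx_mx x.2)) 0 0 * (lead2 (cplx_mx x.1 *m M *m cplx_mx x.2)) 1 1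
     + - ((lead2 (cplx_mx x.1 *m M *m cplx_mx x.2)) 0 1 * (lead2 (cplx_mx x.1 *m M *m cplx_mx x.2)) 1 0).
  by apply: funext => x; rewrite det2.
by apply: ccfD; [|apply: ccfN]; apply: ccfM; rewrite /lead2; under eq_fun do rewrite mxE; apply: he.
Qed.

Lemma ccf_open g : ccf g -> open [set x | g x != 0].
Proof.
move=> [g1 g2].
have -> : [set x | g x != 0] = (fun x => complex.Re (g x)) @^-1` [set y | y != 0] `|`
                               (fun x => complex.Im (g x)) @^-1` [set y | y != 0].
  apply: funext => x /=; apply/propext; case: (g x) => a b /=.
  rewrite eq_complex /= negb_and; split; first by case/orP; [left|right].
  by case=> ->; rewrite ?orbT.
apply: openU; apply: open_comp; [move=> *; exact: g1|exact: open_neq|move=> *; exact: g2|exact: open_neq].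
Qed.
End CC.
Definition selP (R : realType) (f : 'I_2 -> 'I_4) : 'M[R]_4 :=
  \matrix_(i,j) ((((i : nat) < 2)%N && (j == f (inord i)))%:R).
Definition selQ (R : realType) (g : 'I_2 -> 'I_4) : 'M[R]_4 :=
  \matrix_(i,j) ((((j : nat) < 2)%N && (i == g (inord j)))%:R).
Lemma sel_minor (R : realType) (M : 'M[R[i]]_4) (f g : 'I_2 -> 'I_4) :
  lead2 (cplx_mx (selP R f) *m M *m cplx_mx (selQ R g)) = \matrix_(i,j) M (f i) (g j).
Proof.
apply/matrixP => i j; rewrite !mxE.
rewrite (bigD1 (g j)) //= big1 ?addr0; last first.
  move=> b hb; rewrite !mxE /= ltn_ord /=.
  have -> : inord (widen_ord (isT : (2 <= 4)%N) j) = j by apply/val_inj; rewrite /= inordK // ltn_ord.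
  by rewrite (negbTE hb) mulr0.
rewrite !mxE /= ltn_ord /=.
have -> : inord (widen_ord (isT : (2 <= 4)%N) j) = j by apply/val_inj; rewrite /= inordK // ltn_ord.
rewrite eqxx mulr1 (bigD1 (f i)) //= big1 ?addr0; last first.
  move=> b hb; rewrite !mxE /= ltn_ord /=.
  have -> : inord (widen_ord (isT : (2 <= 4)%N) i) = i by apply/val_inj; rewrite /= inordK // ltn_ord.
  by rewrite (negbTE hb) mul0r.
rewrite !mxE /= ltn_ord /=.
have -> : inord (widen_ord (isT : (2 <= 4)%N) i) = i by apply/val_inj; rewrite /= inordK // ltn_ord.
by rewrite eqxx mul1r.
Qed.
Lemma minor_ex (F : fieldType) (M : 'M[F]_4) : \rank M = 2%N ->
  exists (f g : 'I_2 -> 'I_4), \det (\matrix_(i,j) M (f i) (g j)) != 0.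
Proof.
move=> hM.
have key : forall r (f : 'I_r -> 'I_4), r = 2%N -> row_free (rowsub f M) ->
   exists (f g : 'I_2 -> 'I_4), \det (\matrix_(i,j) M (f i) (g j)) != 0.
  move=> r f hr; subst r => hf.
  set N := rowsub f M.
  have key2 : forall r (g : 'I_r -> 'I_4), r = 2%N -> row_free (rowsub g N^T) ->
     exists (f g : 'I_2 -> 'I_4), \det (\matrix_(i,j) M (f i) (g j)) != 0.
    move=> r g hr; subst r => hg.
    exists f, g.
    have -> : \matrix_(i,j) M (f i) (g j) = (rowsub g N^T)^T.
      by apply/matrixP => i j; rewrite !mxE.
    rewrite det_tr; move: hg; rewrite row_free_unit unitmxE unitfE; done.
  apply: (key2 _ (maxrankfun N^T)); last exact: maxrowsub_free.
  by rewrite mxrank_tr; apply/eqP.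
apply: (key _ (maxrankfun M)) => //; exact: maxrowsub_free.
Qed.
Definition lineP (R : realType) (A D : 'M[R]_4) : 'M[{poly R[i]}]_4 :=
  \matrix_(i,j) (((A i j)%:C%C)%:P + ((D i j)%:C%C) *: 'X).

Lemma lead2_map (aR rR : Type) (h : aR -> rR) (A : 'M[aR]_4) :
  map_mx h (lead2 A) = lead2 (map_mx h A).
Proof. by apply/matrixP => i j; rewrite !mxE. Qed.

Definition linepoly (R : realType) (A D1 B D2 : 'M[R]_4) (M : 'M[R[i]]_4) : {poly R[i]} :=
  lead_minor2 (lineP A D1 *m map_mx polyC M *m lineP B D2).

Lemma linepolyE (R : realType) (A D1 B D2 : 'M[R]_4) (M : 'M[R[i]]_4) (t : R) :
  (linepoly A D1 B D2 M).[t%:C%C] =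
  lead_minor2 (cplx_mx (A + t *: D1) *m M *m cplx_mx (B + t *: D2)).
Proof.
rewrite /linepoly /lead_minor2 -horner_evalE -det_map_mx lead2_map !map_mxM.
have hl : forall A D : 'M[R]_4, map_mx (horner_eval t%:C%C) (lineP A D) = cplx_mx (A + t *: D).
  move=> A0 D0; apply/matrixP => i j; rewrite !mxE.
  rewrite /horner_eval.
  rewrite !hornerE.
  by rewrite rmorphD rmorphM /= mulrC.
rewrite !hl; congr (lead_minor2 (_ *m _ *m _)).
by apply/matrixP => i j; rewrite !mxE; exact: hornerC.
Qed.

Lemma root_avoid (R : realType) (p : {poly R[i]}) (eps : R) : p != 0 -> 0 < eps ->
  exists t : R, 0 < t < eps /\ ~~ root p t%:C%C.
Proof.
move=> p0 e0.
pose h := fun n : nat => eps / (n.+2)%:R.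
pose rs := [seq (h n)%:C%C | n <- iota 0 (size p)].
have hu : uniq rs.
  rewrite map_inj_uniq ?iota_uniq // => m n /eqP.
  rewrite eq_complex /= eqxx andbT => /eqP.
  rewrite /h => /(mulfI (lt0r_neq0 e0)) /invr_inj /eqP.
  by rewrite eqr_nat => /eqP [].
have : ~~ all (root p) rs.
  apply/negP => hall.
  by have := max_poly_roots p0 hall hu; rewrite size_map size_iota ltnn.
case/allPn => x /mapP [n _ ->] hx.
exists (h n); split => //.
rewrite /h divr_gt0 ?ltr0n //= ltr_pdivrMr ?ltr0n //.
by rewrite ltr_pMr // ltr1n.
Qed.

Lemma good_ex (R : realType) (M : 'M[R[i]]_4) : \rank M = 2%N ->
  exists P Q : 'M[R]_4, lead_minor2 (cplx_mx P *m M *m cplx_mx Q) != 0.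
Proof.
move=> hM; have [f [g hfg]] := minor_ex hM.
by exists (selP R f), (selQ R g); rewrite /lead_minor2 sel_minor.
Qed.

Lemma line_cvg (R : realType) (A D : 'M[R]_4) : (A + t *: D) @[t --> nbhs (0:R)] --> A.
Proof.
have h : (fun t : R => A + t *: D) @ nbhs (0:R) --> A + 0 *: D.
  apply: cvgD; first exact: cvg_cst.
  apply: cvgZl; exact: cvg_id.
by rewrite scale0r addr0 in h.
Qed.

Lemma G_dense (R : realType) (M : 'M[R[i]]_4) : \rank M = 2%N ->
  dense [set x : 'M[R]_4 * 'M[R]_4 | lead_minor2 (cplx_mx x.1 *m M *m cplx_mx x.2) != 0].
Proof.
move=> hM O [[A B] OAB] oO.
have [P [Q hPQ]] := @good_ex R M hM.
set p := linepoly A (P - A) B (Q - B) M.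
have p0 : p != 0.
  apply/negP => /eqP hp; move: hPQ.
  have := linepolyE A (P - A) B (Q - B) M 1.
  rewrite -/p hp horner0 !scale1r !(addrC _ (_ - _)) !subrK => <-.
  by rewrite eqxx.
have nO : nbhs (A, B) O by apply: open_nbhs_nbhs.
have hc : (fun t : R => (A + t *: (P - A), B + t *: (Q - B))) @ (nbhs (0 : R)) --> (A, B).
  apply: (@cvg_pair _ _ _ (nbhs (0:R)) (nbhs A) (nbhs B)) => //.
    exact: line_cvg.
  exact: line_cvg.
have := hc _ nO; case/nbhs_ballP => e /= e0 he.
have [t [/andP [t0 te] ht]] := root_avoid p0 e0.
exists (A + t *: (P - A), B + t *: (Q - B)); split.
  apply: he; rewrite /ball /= sub0r normrN ger0_norm //; exact: ltW.
by move: ht; rewrite /root linepolyE.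
Qed.

Lemma denseT' (T : topologicalType) : dense [set: T].
Proof. by move=> O [x Ox] _; exists x. Qed.

Unset Implicit Arguments.

Theorem lemma4p1 (R : realType) (s : nat) (M : 'I_s -> 'M[R[i]]_4)
  (hM : forall k : 'I_s, \rank (M k) = 2%N) :
  exists Delta : set ('M[R]_4 * 'M[R]_4),
    open Delta /\ dense Delta /\
    forall L1 L2 : 'M[R]_4, Delta (L1, L2) ->
      forall k : 'I_s, lead_minor2 (cplx_mx L1 *m M k *m cplx_mx L2) != 0.
Proof.
pose G k := [set x : 'M[R]_4 * 'M[R]_4 | lead_minor2 (cplx_mx x.1 *m M k *m cplx_mx x.2) != 0].
have Gop : forall k, open (G k) by move=> k; exact: (ccf_open (ccf_minor (M k))).
have Gd : forall k, dense (G k) by move=> k; exact: (G_dense (hM k)).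
have Dm : forall m, open [set x | forall k : 'I_s, (k < m)%N -> G k x] /\
                    dense [set x | forall k : 'I_s, (k < m)%N -> G k x].
  elim => [|m [IHo IHd]].
    have -> : [set x | forall k : 'I_s, (k < 0)%N -> G k x] = setT.
      by apply/seteqP; split => // x _ k; rewrite ltn0.
    by split; [exact: openT | exact: denseT'].
  have [E [Eo Ed] ->] : exists2 E, open E /\ dense E &
     [set x | forall k : 'I_s, (k < m.+1)%N -> G k x] = E `&` [set x | forall k : 'I_s, (k < m)%N -> G k x].
    case: (ltnP m s) => hms.
      exists (G (Ordinal hms)); first by split.
      apply/seteqP; split => x /=.
        move=> h; split; first by apply: h => /=.
        by move=> k hk; apply: h; rewrite ltnS ltnW.
      case=> h1 h2 k; rewrite ltnS leq_eqVlt => /orP [/eqP hk | hk]; last exact: h2.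
      by have -> : k = Ordinal hms by apply/val_inj.
    exists setT; first by split; [exact: openT | exact: denseT'].
    apply/seteqP; split => x /=.
      by move=> h; split => // k hk; apply: h; rewrite ltnS ltnW.
    case=> _ h2 k hk; apply: h2; exact: leq_trans (ltn_ord k) hms.
  by split; [exact: openI | exact: denseI].
have [Do Dd] := Dm s.
exists [set x | forall k : 'I_s, (k < s)%N -> G k x]; split => //; split => //.
by move=> L1 L2 h k; exact: (h k (ltn_ord k)).
Qed.
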